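(* Let $A,M\in\mathbb{R}^{n\times n}$ with $M$ nonsingular, $B\in\mathbb{R}^{n\times r}$, $j_{\max}\ge1$, shifts $\alpha_1,\ldots,\alpha_{j_{\max}}\in\mathbb{C}$ with $\mathrm{Re}(\alpha_k)<0$ and $A+\alpha_kM$ nonsingular, and $0<\varepsilon<1$. Run the inexact LR-ADI iteration of the context for $j_{\max}$ steps, and set $\sigma_k:=\|M(A+\alpha_kM)^{-1}\|$. (a) If for all $1\le k\le j_{\max}$ $$\|s_k\|\le\tfrac12\Big(\sqrt{\|w_{k-1}\|^2+\tfrac{2\varepsilon}{\sigma_k\gamma_k^2j_{\max}}}-\|w_{k-1}\|\Big),$$ then $\|\Delta\mathcal{R}_{j_{\max}}\|\le\varepsilon$. (b) If for all $1\le k\le j_{\max}$ $$\|s_k\|\le\tfrac12\Big(\sqrt{\|w_{k-1}\|^2+\Big(\tfrac{k\varepsilon}{j_{\max}}-2\|\eta_{k-1}\|\Big)\tfrac{2}{\sigma_k\gamma_k^2}}-\|w_{k-1}\|\Big),$$ then $\|\Delta\mathcal{R}_{j_{\max}}\|\le\varepsilon$.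
   Context: Inexact LR-ADI iteration: $w_0:=B$, $\gamma_k:=\sqrt{-2\,\mathrm{Re}(\alpha_k)}$; for $k\ge1$, $v_k\in\mathbb{C}^{n\times r}$ is an arbitrary approximate solution of $(A+\alpha_kM)v=w_{k-1}$ with residual $s_k:=w_{k-1}-(A+\alpha_kM)v_k$, $w_k:=w_{k-1}+\gamma_k^2Mv_k$, $Z_k:=[\gamma_1v_1,\ldots,\gamma_kv_k]$, $S_k:=[s_1,\ldots,s_k]$, $\Gamma_k:=\mathrm{diag}(\gamma_1,\ldots,\gamma_k)\otimes I_r$. True residual $\mathcal{R}^{\mathrm{true}}_k:=AZ_kZ_k^*M^*+MZ_kZ_k^*A^*+BB^*$, computed residual $\mathcal{R}^{\mathrm{comp}}_k:=w_kw_k^*$, residual gap $\Delta\mathcal{R}_k:=\mathcal{R}^{\mathrm{true}}_k-\mathcal{R}^{\mathrm{comp}}_k$, and $\eta_k:=-S_k\Gamma_kZ_k^*M^*$ for $k\ge1$, $\eta_0:=0$. Norms are spectral. *)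

(* Defs.v *)
From HB Require Import structures.
From mathcomp Require Import all_boot all_order all_algebra.
From mathcomp Require Import complex.
From mathcomp Require Import reals classical_sets.
Set Implicit Arguments. Unset Strict Implicit. Unset Printing Implicit Defensive.
Import Order.TTheory GRing.Theory Num.Theory.
Local Open Scope ring_scope.
Local Open Scope classical_set_scope.

Section LRADI.
Variable R : realType.
Local Notation C := (R[i]).

Definition cabs2 (z : C) : R := complex.Re z ^+ 2 + complex.Im z ^+ 2.

Definition vnorm p (u : 'cV[C]_p) : R := Num.sqrt (\sum_i cabs2 (u i 0)).

Definition snorm m p (X : 'M[C]_(m, p)) : R :=
  sup [set vnorm (X *m u) | u in [set u : 'cV[C]_p | vnorm u <= 1]].

Definition ctr m p (X : 'M[C]_(m, p)) : 'M[C]_(p, m) :=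
  (map_mx (fun z : C => complex.Complex (complex.Re z) (- complex.Im z)) X)^T.

Definition cmx m p (X : 'M[R]_(m, p)) : 'M[C]_(m, p) :=
  map_mx (fun x : R => x%:C%C) X.

Variables (n r : nat) (A M : 'M[R]_n) (B : 'M[R]_(n, r)) (alpha : nat -> C)
  (v : nat -> 'M[C]_(n, r)).

Definition gam (k : nat) : R := Num.sqrt (- 2 * complex.Re (alpha k)).

Definition shifted (k : nat) : 'M[C]_n := cmx A + alpha k *: cmx M.

Fixpoint w (k : nat) : 'M[C]_(n, r) :=
  match k with
  | 0 => cmx B
  | k'.+1 => w k' + ((gam k) ^+ 2)%:C%C *: (cmx M *m v k)
  end.

Definition s (k : nat) : 'M[C]_(n, r) := w k.-1 - shifted k *m v k.

Definition Z (k : nat) : 'M[C]_(n, \sum_(j < k) r) :=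
  \mxrow_(j < k) ((gam j.+1)%:C%C *: v j.+1).

Definition S (k : nat) : 'M[C]_(n, \sum_(j < k) r) :=
  \mxrow_(j < k) s j.+1.

Definition Gam (k : nat) : 'M[C]_(\sum_(j < k) r) :=
  \mxdiag_(j < k) ((gam j.+1)%:C%C%:M : 'M[C]_r).

Definition Rtrue (k : nat) : 'M[C]_n :=
  cmx A *m Z k *m ctr (Z k) *m ctr (cmx M)
  + cmx M *m Z k *m ctr (Z k) *m ctr (cmx A) + cmx B *m ctr (cmx B).

Definition Rcomp (k : nat) : 'M[C]_n := w k *m ctr (w k).

Definition DeltaR (k : nat) : 'M[C]_n := Rtrue k - Rcomp k.

Definition eta_adi (k : nat) : 'M[C]_n :=
  if k is 0 then 0 else - (S k *m Gam k *m ctr (Z k) *m ctr (cmx M)).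

Definition sig (k : nat) : R := snorm (cmx M *m invmx (shifted k)).

End LRADI.

(* Main.v *)
Require Import Defs.
From HB Require Import structures.
From mathcomp Require Import all_boot all_order all_algebra.
From mathcomp Require Import complex.
From mathcomp Require Import reals classical_sets.
From mathcomp Require Import ring lra.
Set Implicit Arguments. Unset Strict Implicit. Unset Printing Implicit Defensive.
Import Order.TTheory GRing.Theory Num.Theory.
Local Open Scope ring_scope.
Local Open Scope classical_set_scope.
Section Ctr.
Variable R : realType.
Local Notation C := (R[i]).

Lemma ctrE m p (X : 'M[C]_(m, p)) : ctr X = (map_mx conjc X)^T.
Proof. by rewrite /ctr; congr (_^T); apply: eq_map_mx => -[a b]. Qed.

Lemma ctrD m p (X Y : 'M[C]_(m, p)) : ctr (X + Y) = ctr X + ctr Y.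
Proof. by rewrite !ctrE map_mxD linearD. Qed.
Lemma ctrN m p (X : 'M[C]_(m, p)) : ctr (- X) = - ctr X.
Proof. by rewrite !ctrE map_mxN linearN. Qed.
Lemma ctrB m p (X Y : 'M[C]_(m, p)) : ctr (X - Y) = ctr X - ctr Y.
Proof. by rewrite ctrD ctrN. Qed.
Lemma ctrM m p q (X : 'M[C]_(m, p)) (Y : 'M[C]_(p, q)) : ctr (X *m Y) = ctr Y *m ctr X.
Proof. by rewrite !ctrE map_mxM trmx_mul. Qed.
Lemma ctrZ m p a (X : 'M[C]_(m, p)) : ctr (a *: X) = conjc a *: ctr X.
Proof. by rewrite !ctrE map_mxZ linearZ. Qed.
Lemma ctrK m p (X : 'M[C]_(m, p)) : ctr (ctr X) = X.
Proof. rewrite !ctrE map_trmx trmxK; apply/matrixP => i j; rewrite !mxE; exact: conjcK. Qed.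
Lemma ctr0 m p : ctr (0 : 'M[C]_(m, p)) = 0.
Proof. by rewrite ctrE map_mx0 linear0. Qed.
Lemma conj_realC (x : R) : conjc (x%:C)%C = (x%:C)%C.
Proof. exact: conjc_real. Qed.

Lemma ctr_mxrow m k (p_ : 'I_k -> nat) (B_ : forall j, 'M[C]_(m, p_ j)) :
  ctr (\mxrow_j B_ j) = \mxcol_j ctr (B_ j).
Proof. by apply/matrixP => i j; rewrite !mxE. Qed.
End Ctr.
Section Alg.
Variable R : realType.
Local Notation C := (R[i]).
Variables (n r : nat) (A M : 'M[R]_n) (B : 'M[R]_(n, r)) (alpha : nat -> C)
  (v : nat -> 'M[C]_(n, r)).

Local Notation g k := (((gam alpha k) ^+ 2)%:C)%C.
Local Notation sk k := (s A M B alpha v k).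
Local Notation wk k := (w M B alpha v k).

Definition Q k := \sum_(j < k) g j.+1 *: (v j.+1 *m ctr (v j.+1)).
Definition P k := \sum_(j < k) g j.+1 *: (sk j.+1 *m ctr (v j.+1)).

Lemma gC k : (gam alpha k)%:C%C * (gam alpha k)%:C%C = g k.
Proof. by rewrite -rmorphM expr2. Qed.

Lemma ZZ k : Z alpha v k *m ctr (Z alpha v k) = Q k.
Proof.
rewrite /Z ctr_mxrow mul_mxrow_mxcol /Q; apply: eq_bigr => j _.
by rewrite ctrZ conj_realC -scalemxAl -scalemxAr scalerA gC.
Qed.

Lemma SGZ k : S A M B alpha v k *m Gam r alpha k *m ctr (Z alpha v k) = P k.
Proof.
rewrite /S /Gam /Z mul_mxrow_mxdiag ctr_mxrow mul_mxrow_mxcol /P; apply: eq_bigr => j _.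
by rewrite ctrZ conj_realC mul_mx_scalar -scalemxAl -scalemxAr scalerA gC.
Qed.

Lemma eta_P k : eta_adi A M B alpha v k = - (P k *m ctr (cmx M)).
Proof.
case: k => [|k]; first by rewrite /P big_ord0 mul0mx oppr0.
by rewrite /eta_adi SGZ.
Qed.

Lemma lin5 (V : lmodType C) (X1 X2 X3 X4 X5 : V) (gg a b : C) :
  gg + a + b = 0 ->
  gg *: (X1 + X2) - (gg *: (X3 + X4) + (gg * gg) *: X5)
  + gg *: (X3 - X1 - a *: X5) + gg *: (X4 - X2 - b *: X5) = 0.
Proof.
move=> h.
have e : X1 + X2 - (X3 + X4) + (X3 - X1 - a *: X5) + (X4 - X2 - b *: X5) = - ((a + b) *: X5).
  rewrite scalerDl !opprD !addrA.
  rewrite (addrAC _ (- X4) X3) subrK (addrAC _ (- X4) (- X1)) (addrAC X1 X2 (- X1)) subrr add0r.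
  by rewrite (addrAC _ (- (a *: X5)) X4) subrK (addrAC X2 (- (a *: X5)) (- X2)) subrr add0r.
have hz : forall x y z u t : V, x - (y + z) + u + t = x - y + u + t - z.
  by move=> x y z u t; rewrite opprD !addrA (addrAC _ (- z) u) (addrAC _ (- z) t).
rewrite hz -!scalerBr -!scalerDr e scalerN scalerA -opprD -scalerDl.
by rewrite -mulrDr addrC addrA h mulr0 scale0r oppr0.
Qed.

Local Notation cA := (cmx A).
Local Notation cM := (cmx M).

Lemma Rtrue_Q k : Rtrue A M B alpha v k =
  cA *m Q k *m ctr cM + cM *m Q k *m ctr cA + cmx B *m ctr (cmx B).
Proof. by rewrite /Rtrue -!(mulmxA _ (Z alpha v k)) ZZ. Qed.

Lemma conj_g k : conjc (g k) = g k.
Proof. exact: conjc_real. Qed.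

Lemma Rtrue_rec k :
  Rtrue A M B alpha v k.+1 = Rtrue A M B alpha v k + g k.+1 *: ((cA *m v k.+1) *m ctr (cM *m v k.+1) + (cM *m v k.+1) *m ctr (cA *m v k.+1)).
Proof.
set u := cM *m v k.+1; set p := cA *m v k.+1.
rewrite !Rtrue_Q /Q big_ord_recr /= -/(Q k).
rewrite !mulmxDr !mulmxDl scalerDr /u /p !ctrM.
rewrite -!scalemxAr -!scalemxAl !mulmxA.
set a1 := cA *m Q k *m _; set a2 := cM *m Q k *m _; set a3 := cmx B *m _.
set b1 := g k.+1 *: _; set b2 := g k.+1 *: _.
by rewrite (addrACA a1 b1 a2 b2) (addrAC (a1 + a2)).
Qed.

Lemma Rcomp_rec k :
  Rcomp M B alpha v k.+1 = Rcomp M B alpha v k + (g k.+1 *: (wk k *m ctr (cM *m v k.+1) + (cM *m v k.+1) *m ctr (wk k)) + (g k.+1 * g k.+1) *: ((cM *m v k.+1) *m ctr (cM *m v k.+1))).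
Proof.
set u := cM *m v k.+1; set W := wk k.
rewrite /Rcomp /= ctrD ctrZ conj_g !mulmxDr !mulmxDl.
rewrite -!scalemxAr -!scalemxAl scalerA scalerDr !addrA.
by congr (_ + _); rewrite addrAC.
Qed.

Lemma P_rec k :
  P k.+1 *m ctr cM = P k *m ctr cM
    + g k.+1 *: (wk k *m ctr (cM *m v k.+1) - (cA *m v k.+1) *m ctr (cM *m v k.+1) - alpha k.+1 *: ((cM *m v k.+1) *m ctr (cM *m v k.+1))).
Proof.
set u := cM *m v k.+1; set p := cA *m v k.+1; set W := wk k.
rewrite /P big_ord_recr /= -/(P k) mulmxDl -scalemxAl; congr (_ + g k.+1 *: _).
rewrite /s /= -/W /shifted ctrM -mulmxA mulmxBl mulmxDl mulmxDl -scalemxAl -scalemxAl.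
by rewrite !mulmxA opprD addrA.
Qed.

Lemma g_alpha k : complex.Re (alpha k) <= 0 -> g k + alpha k + conjc (alpha k) = 0.
Proof.
move=> h; rewrite -addrA addcJ /gam sqr_sqrtr; last by rewrite mulNr oppr_ge0 mulr_ge0_le0.
by rewrite mulNr rmorphN rmorphM /= rmorph_nat addNr.
Qed.

Lemma D_E k : (forall j, (1 <= j <= k)%N -> complex.Re (alpha j) <= 0) ->
  (Rtrue A M B alpha v k - Rcomp M B alpha v k) + P k *m ctr cM + ctr (P k *m ctr cM) = 0.
Proof.
elim: k => [|k IH] hre.
  by rewrite /P big_ord0 mul0mx ctr0 !addr0 Rtrue_Q /Q big_ord0 mulmx0 mul0mx !add0r /Rcomp /= mulmx0 mul0mx add0r subrr.

rewrite Rtrue_rec Rcomp_rec P_rec.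
set D := Rtrue _ _ _ _ _ k; set Rc := Rcomp _ _ _ _ k; set E := P k *m _.
set u := cM *m v k.+1; set p := cA *m v k.+1; set W := wk k.
set gg := g k.+1.
rewrite !ctrD ctrZ conj_g !ctrB ctrZ !(ctrM W) !(ctrM p) !(ctrM u) !ctrK.
have h1 : forall d x rc y e z f t : 'M[C]_n,
   (d + x - (rc + y)) + (e + z) + (f + t) = ((d - rc) + e + f) + (x - y + z + t).
  move=> d x rc y e z f t; rewrite opprD !addrA.
  rewrite (addrAC d x (- rc)) -!(addrA (d - rc)); congr (_ + _).
  by rewrite [e + f + x]addrC addrA (addrAC (x + e) f (- y)) (addrAC x e (- y)) (addrAC (x - y + e) f z).
rewrite h1 IH; last by move=> j /andP [j1 jk]; apply: hre; rewrite j1 /= ltnW.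
rewrite add0r lin5 //; apply: g_alpha; apply: hre; by rewrite /=.
Qed.
End Alg.
Section Norms.
Variable R : realType.
Local Notation C := (R[i]).
Local Notation Re := (@complex.Re R).
Local Notation Im := (@complex.Im R).

Lemma ReD (x y : C) : Re (x + y) = Re x + Re y.
Proof. by case: x; case: y. Qed.
Lemma ImD (x y : C) : Im (x + y) = Im x + Im y.
Proof. by case: x; case: y. Qed.
Lemma ReM (x y : C) : Re (x * y) = Re x * Re y - Im x * Im y.
Proof. by case: x => a b; case: y => c d /=. Qed.
Lemma ImM (x y : C) : Im (x * y) = Re x * Im y + Im x * Re y.
Proof. by case: x => a b; case: y => c d /=. Qed.
Lemma ReN (x : C) : Re (- x) = - Re x. Proof. by case: x. Qed.
Lemma ImN (x : C) : Im (- x) = - Im x. Proof. by case: x. Qed.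

Lemma Re_sum I (rr : seq I) (P : pred I) (F : I -> C) :
  Re (\sum_(i <- rr | P i) F i) = \sum_(i <- rr | P i) Re (F i).
Proof. exact: (big_morph Re ReD). Qed.

Lemma cabs2_ge0 (z : C) : 0 <= cabs2 z.
Proof. by rewrite /cabs2 addr_ge0 // sqr_ge0. Qed.

Lemma cabs2_eq0 (z : C) : cabs2 z = 0 -> z = 0.
Proof.
case: z => a b; rewrite /cabs2 /= => /eqP; rewrite paddr_eq0 ?sqr_ge0 //.
by rewrite !sqrf_eq0 => /andP [/eqP -> /eqP ->].
Qed.

Lemma cabs2M (x y : C) : cabs2 (x * y) = cabs2 x * cabs2 y.
Proof. rewrite /cabs2 ReM ImM; ring. Qed.

Lemma cabs2N (x : C) : cabs2 (- x) = cabs2 x.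
Proof. rewrite /cabs2 ReN ImN; ring. Qed.

Definition ip p (u z : 'cV[C]_p) : R :=
  \sum_i (Re (u i 0) * Re (z i 0) + Im (u i 0) * Im (z i 0)).

Lemma vnorm_ge0 p (u : 'cV[C]_p) : 0 <= vnorm u.
Proof. exact: sqrtr_ge0. Qed.

Lemma vnorm_sq p (u : 'cV[C]_p) : vnorm u ^+ 2 = \sum_i cabs2 (u i 0).
Proof. by rewrite /vnorm sqr_sqrtr // sumr_ge0 // => i _; apply: cabs2_ge0. Qed.

Lemma ip_self p (u : 'cV[C]_p) : ip u u = vnorm u ^+ 2.
Proof. by rewrite vnorm_sq /ip; apply: eq_bigr => i _; rewrite /cabs2 !expr2. Qed.

Lemma vnorm_eq0 p (u : 'cV[C]_p) : vnorm u = 0 -> u = 0.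
Proof.
move=> h; have : \sum_i cabs2 (u i 0) = 0 by rewrite -vnorm_sq h expr0n.
move=> /psumr_eq0P h2; apply/matrixP => i j; rewrite ord1 mxE; apply: cabs2_eq0.
by apply: h2 => // k _; apply: cabs2_ge0.
Qed.

Lemma vnorm0 p : vnorm (0 : 'cV[C]_p) = 0.
Proof.
rewrite /vnorm big1 ?sqrtr0 // => i _; rewrite mxE /cabs2 /=; by rewrite expr0n addr0.
Qed.

Lemma CS p (u z : 'cV[C]_p) : ip u z <= vnorm u * vnorm z.
Proof.
have [hu|hu] := eqVneq (vnorm u) 0.
  by rewrite (vnorm_eq0 hu) vnorm0 mul0r /ip big1 // => i _; rewrite mxE /= !mul0r addr0.
have [hz|hz] := eqVneq (vnorm z) 0.
  by rewrite (vnorm_eq0 hz) vnorm0 mulr0 /ip big1 // => i _; rewrite mxE /= !mulr0 addr0.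
set a := vnorm u; set b := vnorm z.
have a0 : 0 < a by rewrite lt0r hu vnorm_ge0.
have b0 : 0 < b by rewrite lt0r hz vnorm_ge0.
have h : 2 * a * b * ip u z <= b ^+ 2 * (\sum_i cabs2 (u i 0)) + a ^+ 2 * (\sum_i cabs2 (z i 0)).
  rewrite /ip mulr_sumr !mulr_sumr -big_split /=.
  apply: ler_sum => i _; rewrite /cabs2.
  set x1 := Re (u i 0); set x2 := Im (u i 0); set y1 := Re (z i 0); set y2 := Im (z i 0).
  have := sqr_ge0 (b * x1 - a * y1); have := sqr_ge0 (b * x2 - a * y2); nra.
rewrite -!vnorm_sq -/a -/b in h.
have hp : 0 < 2 * a * b by rewrite !mulr_gt0.
rewrite -(ler_pM2l hp); apply: (le_trans h); rewrite le_eqVlt; apply/orP; left; apply/eqP; ring.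
Qed.

Lemma cabs2D (x y : C) : cabs2 (x + y) = cabs2 x + cabs2 y + 2 * (Re x * Re y + Im x * Im y).
Proof. rewrite /cabs2 ReD ImD; ring. Qed.

Lemma vnormD p (u z : 'cV[C]_p) : vnorm (u + z) <= vnorm u + vnorm z.
Proof.
have h : vnorm (u + z) ^+ 2 <= (vnorm u + vnorm z) ^+ 2.
  rewrite vnorm_sq.
  have -> : \sum_i cabs2 ((u + z) i 0) = vnorm u ^+ 2 + vnorm z ^+ 2 + 2 * ip u z.
    rewrite !vnorm_sq /ip mulr_sumr -!big_split /=; apply: eq_bigr => i _.
    by rewrite mxE cabs2D.
  have := CS u z; nra.
have := vnorm_ge0 (u + z); have := vnorm_ge0 u; have := vnorm_ge0 z; nra.
Qed.

Lemma vnormZ p (c : C) (u : 'cV[C]_p) : vnorm (c *: u) = Num.sqrt (cabs2 c) * vnorm u.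
Proof.
rewrite /vnorm -sqrtrM ?cabs2_ge0 // mulr_sumr; congr Num.sqrt; apply: eq_bigr => i _.
by rewrite mxE cabs2M.
Qed.

Lemma vnormN p (u : 'cV[C]_p) : vnorm (- u) = vnorm u.
Proof. by rewrite /vnorm; congr Num.sqrt; apply: eq_bigr => i _; rewrite mxE cabs2N. Qed.


Lemma cabs2_le_vnorm p (u : 'cV[C]_p) i : Num.sqrt (cabs2 (u i 0)) <= vnorm u.
Proof.
rewrite /vnorm ler_wsqrtr // (bigD1 i) //= lerDl sumr_ge0 // => j _; exact: cabs2_ge0.
Qed.

Lemma vnorm_sum p I (rr : seq I) (F : I -> 'cV[C]_p) :
  vnorm (\sum_(i <- rr) F i) <= \sum_(i <- rr) vnorm (F i).
Proof.
elim: rr => [|a rr IH]; first by rewrite !big_nil vnorm0.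
rewrite !big_cons; apply: le_trans (vnormD _ _) _; exact: lerD.
Qed.

Lemma mul_sum_col m p (X : 'M[C]_(m, p)) (u : 'cV[C]_p) :
  X *m u = \sum_j u j 0 *: col j X.
Proof.
apply/matrixP => i k; rewrite ord1 !mxE summxE; apply: eq_bigr => j _.
by rewrite !mxE mulrC.
Qed.

Definition snset m p (X : 'M[C]_(m, p)) :=
  [set vnorm (X *m u) | u in [set u : 'cV[C]_p | vnorm u <= 1]].

Lemma snset_ub m p (X : 'M[C]_(m, p)) : has_ubound (snset X).
Proof.
exists (\sum_j vnorm (col j X)) => _ [u hu <-].
rewrite mul_sum_col; apply: (le_trans (vnorm_sum _ _)).
apply: ler_sum => j _; rewrite vnormZ.
have h := cabs2_le_vnorm u j; have h2 : Num.sqrt (cabs2 (u j 0)) <= 1 by apply: le_trans h hu.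
by rewrite ler_piMl ?vnorm_ge0.
Qed.

Lemma snset_n0 m p (X : 'M[C]_(m, p)) : snset X !=set0.
Proof. by exists (vnorm (X *m 0)), 0 => //=; rewrite vnorm0. Qed.

Lemma snorm_ub m p (X : 'M[C]_(m, p)) u : vnorm u <= 1 -> vnorm (X *m u) <= snorm X.
Proof. by move=> hu; apply: ub_le_sup (snset_ub X) _ _; exists u. Qed.

Lemma snorm_ge0 m p (X : 'M[C]_(m, p)) : 0 <= snorm X.
Proof.
by apply: le_trans (snorm_ub X (u := 0) _); rewrite ?mulmx0 ?vnorm0.
Qed.

Lemma vnorm_mul m p (X : 'M[C]_(m, p)) u : vnorm (X *m u) <= snorm X * vnorm u.
Proof.
have [h|h] := eqVneq (vnorm u) 0.
  by rewrite (vnorm_eq0 h) mulmx0 !vnorm0 mulr0.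
have a0 : 0 < vnorm u by rewrite lt0r h vnorm_ge0.
have hu : vnorm (((vnorm u)^-1)%:C%C *: u) <= 1.
  rewrite vnormZ /cabs2 /= expr0n addr0 sqrtr_sqr ger0_norm ?invr_ge0 ?vnorm_ge0 //.
  by rewrite mulVf.
have := snorm_ub X hu; rewrite -scalemxAr vnormZ /cabs2 /= expr0n addr0 sqrtr_sqr.
rewrite ger0_norm ?invr_ge0 ?vnorm_ge0 // => h2.
by rewrite -ler_pdivrMr // mulrC.
Qed.

Lemma snorm_le m p (X : 'M[C]_(m, p)) c : 0 <= c ->
  (forall u, vnorm (X *m u) <= c * vnorm u) -> snorm X <= c.
Proof.
move=> c0 h; apply: ge_sup (snset_n0 X) _ => _ [u hu <-].
apply: le_trans (h u) _; by rewrite ler_piMr.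
Qed.
End Norms.
Section Snorm.
Variable R : realType.
Local Notation C := (R[i]).

Lemma snormD m p (X Y : 'M[C]_(m, p)) : snorm (X + Y) <= snorm X + snorm Y.
Proof.
apply: snorm_le; first by rewrite addr_ge0 ?snorm_ge0.
move=> u; rewrite mulmxDl mulrDl; apply: (le_trans (vnormD _ _)).
by apply: lerD; apply: vnorm_mul.
Qed.

Lemma snormM m p q (X : 'M[C]_(m, p)) (Y : 'M[C]_(p, q)) : snorm (X *m Y) <= snorm X * snorm Y.
Proof.
apply: snorm_le; first by rewrite mulr_ge0 ?snorm_ge0.
move=> u; rewrite -mulmxA -mulrA; apply: (le_trans (vnorm_mul _ _)).
by apply: ler_wpM2l; [apply: snorm_ge0 | apply: vnorm_mul].
Qed.

Lemma snormN_le m p (X : 'M[C]_(m, p)) : snorm (- X) <= snorm X.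
Proof.
apply: snorm_le; first exact: snorm_ge0.
by move=> u; rewrite mulNmx vnormN; apply: vnorm_mul.
Qed.

Lemma snormN m p (X : 'M[C]_(m, p)) : snorm (- X) = snorm X.
Proof. by apply/eqP; rewrite eq_le snormN_le /= -{1}(opprK X) snormN_le. Qed.

Lemma snormZ m p (c : R) (X : 'M[C]_(m, p)) : 0 <= c -> snorm ((c%:C)%C *: X) <= c * snorm X.
Proof.
move=> c0; apply: snorm_le; first by rewrite mulr_ge0 ?snorm_ge0.
move=> u; rewrite -scalemxAl vnormZ /cabs2 /= expr0n addr0 sqrtr_sqr ger0_norm // -mulrA.
by apply: ler_wpM2l => //; apply: vnorm_mul.
Qed.

Lemma ip_ctr p (a b : 'cV[C]_p) : complex.Re ((ctr a *m b) 0 0) = ip a b.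
Proof.
rewrite mxE Re_sum /ip; apply: eq_bigr => i _.
by rewrite !mxE ReM /=; rewrite mulNr opprK.
Qed.

Lemma sq_le (y c : R) : 0 <= y -> 0 <= c -> y ^+ 2 <= c * y -> y <= c.
Proof. nra. Qed.

Lemma snorm_ctr m p (X : 'M[C]_(m, p)) : snorm (ctr X) <= snorm X.
Proof.
apply: snorm_le; first exact: snorm_ge0.
move=> u; set y := ctr X *m u.
have e : vnorm y ^+ 2 = ip u (X *m y).
  by rewrite -ip_self -!ip_ctr {1}/y ctrM ctrK mulmxA.
have h1 := CS u (X *m y).
have h2 := vnorm_mul X y.
have h3 := vnorm_ge0 u; have h4 := vnorm_ge0 y; have h5 := snorm_ge0 X.
have h6 : vnorm y ^+ 2 <= (snorm X * vnorm u) * vnorm y.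
  rewrite e; apply: (le_trans h1); rewrite (mulrC (snorm X)) -mulrA.
  by apply: ler_wpM2l.
have c0 : 0 <= snorm X * vnorm u by rewrite mulr_ge0.
exact: sq_le h4 c0 h6.
Qed.
End Snorm.
Section Main.
Variable R : realType.
Local Notation C := (R[i]).
Variables (n r : nat) (A M : 'M[R]_n) (B : 'M[R]_(n, r)) (alpha : nat -> C)
  (v : nat -> 'M[C]_(n, r)).
Local Notation cA := (cmx A).
Local Notation cM := (cmx M).
Local Notation eta k := (eta_adi A M B alpha v k).

Lemma DeltaR_eta k : (forall j, (1 <= j <= k)%N -> complex.Re (alpha j) <= 0) ->
  DeltaR A M B alpha v k = eta k + ctr (eta k).
Proof.
move=> h; have := D_E A M B v h; rewrite eta_P ctrN -addrA => /eqP; rewrite addr_eq0 => /eqP.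
by rewrite /DeltaR => ->; rewrite opprD.
Qed.

Lemma snorm_DR k : (forall j, (1 <= j <= k)%N -> complex.Re (alpha j) <= 0) ->
  snorm (DeltaR A M B alpha v k) <= 2 * snorm (eta k).
Proof.
move=> h; rewrite DeltaR_eta // mulr2n mulrDl mul1r.
by apply: (le_trans (snormD _ _)); apply: lerD => //; apply: snorm_ctr.
Qed.

Lemma eta_rec k : eta k.+1 = eta k
  - ((gam alpha k.+1 ^+ 2)%:C)%C *: (s A M B alpha v k.+1 *m ctr (cM *m v k.+1)).
Proof.
rewrite !eta_P /P big_ord_recr /= -/(P _ _ _ _ _ k) mulmxDl -scalemxAl opprD.
by rewrite ctrM mulmxA.
Qed.

Lemma eta_step k : shifted A M alpha k.+1 \in unitmx ->
  snorm (eta k.+1) <= snorm (eta k) + gam alpha k.+1 ^+ 2 * snorm (s A M B alpha v k.+1)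
     * (sig A M alpha k.+1 * (snorm (w M B alpha v k) + snorm (s A M B alpha v k.+1))).
Proof.
move=> hu; rewrite eta_rec; apply: (le_trans (snormD _ _)); apply: lerD => //.
rewrite snormN; apply: (le_trans (snormZ _ _)); first exact: sqr_ge0.
rewrite -mulrA; apply: ler_wpM2l; first exact: sqr_ge0.
apply: (le_trans (snormM _ _)); apply: ler_wpM2l; first exact: snorm_ge0.
apply: (le_trans (snorm_ctr _)).
have -> : cM *m v k.+1 = (cM *m invmx (shifted A M alpha k.+1)) *m (w M B alpha v k - s A M B alpha v k.+1).
  rewrite -mulmxA; congr (_ *m _).
  have -> : w M B alpha v k - s A M B alpha v k.+1 = shifted A M alpha k.+1 *m v k.+1.
    by rewrite /s /= opprB addrC subrK.
  by rewrite mulKmx.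
apply: (le_trans (snormM _ _)); apply: ler_wpM2l; first exact: snorm_ge0.
by apply: (le_trans (snormD _ _)); rewrite snormN.
Qed.
End Main.
Lemma step_bound (R : realType) (a x y wv sv : R) : 0 <= a -> 0 <= x -> 0 <= wv -> 0 <= sv ->
  (a != 0 -> a * y = 2 * x) ->
  sv <= 2^-1 * (Num.sqrt (wv ^+ 2 + y) - wv) ->
  a * sv * (wv + sv) <= x / 2.
Proof.
move=> a0 x0 w0 s0 hy hs.
have [->|an0] := eqVneq a 0; first by rewrite !mul0r divr_ge0.
have ap : 0 < a by rewrite lt0r an0.
have ey := hy an0.
have y0 : 0 <= y by have := mulr_ge0 (ler0n _ 2) x0; rewrite -ey pmulr_rge0.
set S := Num.sqrt (wv ^+ 2 + y).
have S0 : 0 <= S := sqrtr_ge0 _.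
have SS : S ^+ 2 = wv ^+ 2 + y by rewrite sqr_sqrtr // addr_ge0 ?sqr_ge0.
have h1 : 2 * sv + wv <= S by move: hs; rewrite -/S; lra.
have h2 : (2 * sv + wv) ^+ 2 <= wv ^+ 2 + y by rewrite -SS; nra.
have h3 : 4 * (sv * (wv + sv)) <= y by nra.
have h4 : a * (4 * (sv * (wv + sv))) <= a * y by rewrite ler_wpM2l // ltW.
rewrite ey in h4; lra.
Qed.

Lemma snorm0 (R : realType) m p : snorm (0 : 'M[R[i]]_(m, p)) = 0.
Proof.
apply/eqP; rewrite eq_le snorm_ge0 andbT; apply: snorm_le => // u.
by rewrite mul0mx vnorm0 mul0r.
Qed.

Unset Implicit Arguments.
Local Close Scope classical_set_scope.

Theorem theorem3p6 (R : realType) (n r : nat) (A M : 'M[R]_n) (B : 'M[R]_(n, r))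
  (jmax : nat) (alpha : nat -> R[i]) (v : nat -> 'M[R[i]]_(n, r)) (eps : R) :
  M \in unitmx ->
  (1 <= jmax)%N ->
  (forall k, (1 <= k <= jmax)%N ->
     complex.Re (alpha k) < 0 /\ shifted A M alpha k \in unitmx) ->
  0 < eps < 1 ->
  let gamma := gam alpha in
  let wn k := snorm (w M B alpha v k) in
  let sn k := snorm (s A M B alpha v k) in
  let sigma := sig A M alpha in
  let DR := snorm (DeltaR A M B alpha v jmax) in
  ((forall k, (1 <= k <= jmax)%N ->
      sn k <= 2^-1 * (Num.sqrt (wn k.-1 ^+ 2
                 + 2 * eps / (sigma k * gamma k ^+ 2 * jmax%:R)) - wn k.-1)) ->
   DR <= eps)
  /\
  ((forall k, (1 <= k <= jmax)%N ->
      sn k <= 2^-1 * (Num.sqrt (wn k.-1 ^+ 2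
                 + (k%:R * eps / jmax%:R
                    - 2 * snorm (eta_adi A M B alpha v k.-1))
                   * (2 / (sigma k * gamma k ^+ 2))) - wn k.-1)) ->
   DR <= eps).
Proof.
move=> _ j1 hk /andP [e0 _] gamma wn sn sigma DR.
have hre : forall j, (1 <= j <= jmax)%N -> complex.Re (alpha j) <= 0.
  by move=> j hj; have [h _] := hk j hj; apply: ltW.
have hDR : DR <= 2 * snorm (eta_adi A M B alpha v jmax) by apply: snorm_DR.
set e := fun k => snorm (eta_adi A M B alpha v k).
have jp : 0 < jmax%:R :> R by rewrite ltr0n.
have step : forall k, (k < jmax)%N ->
    e k.+1 <= e k + (sigma k.+1 * gamma k.+1 ^+ 2) * sn k.+1 * (wn k + sn k.+1).
  move=> k hk1; have [_ hu] := hk k.+1 hk1.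
  apply: (le_trans (eta_step B v hu)); rewrite -/(e k) lerD2l.
  by rewrite le_eqVlt; apply/orP; left; apply/eqP; rewrite /sn /wn /sigma /gamma; ring.
have a0 : forall k, 0 <= sigma k * gamma k ^+ 2.
  by move=> k; rewrite mulr_ge0 ?snorm_ge0 ?sqr_ge0.
have e00 : e 0%N = 0 by rewrite /e /eta_adi snorm0.
split => hyp.
- have claim : forall k, (k <= jmax)%N -> e k <= k%:R * eps / (2 * jmax%:R).
    elim => [|k IH] hk1; first by rewrite e00 mul0r mul0r.
    apply: (le_trans (step k hk1)).
    have x0 : 0 <= eps / jmax%:R by rewrite divr_ge0 // ltW.
    have hy : sigma k.+1 * gamma k.+1 ^+ 2 != 0 ->
        (sigma k.+1 * gamma k.+1 ^+ 2) * (2 * eps / (sigma k.+1 * gamma k.+1 ^+ 2 * jmax%:R))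
        = 2 * (eps / jmax%:R).
      move=> an; have [s0 g0] : sigma k.+1 != 0 /\ gamma k.+1 != 0.
        by move: an; rewrite mulf_eq0 negb_or sqrf_eq0 => /andP [-> ->].
      by field; rewrite s0 g0 pnatr_eq0 -lt0n j1.
    have hb := step_bound (a0 k.+1) x0 (snorm_ge0 _) (snorm_ge0 _) hy (hyp k.+1 hk1).
    have IH' := IH (ltnW hk1).
    have ek : k.+1%:R * eps / (2 * jmax%:R) = k%:R * eps / (2 * jmax%:R) + eps / jmax%:R / 2.
      by rewrite -natr1; field; rewrite pnatr_eq0 -lt0n j1.
    by rewrite ek; apply: lerD.
  have := claim jmax (leqnn _); rewrite -/(e jmax) in hDR.
  have -> : jmax%:R * eps / (2 * jmax%:R) = eps / 2 by field; rewrite pnatr_eq0 -lt0n j1.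
  lra.
- have claim : forall k, (k <= jmax)%N -> 2 * e k <= k%:R * eps / jmax%:R.
    elim => [|k IH] hk1; first by rewrite e00 mulr0 !mul0r.
    apply: (le_trans (ler_wpM2l (ler0n _ 2) (step k hk1))).
    have IH' := IH (ltnW hk1).
    have ek : k.+1%:R * eps / jmax%:R = k%:R * eps / jmax%:R + eps / jmax%:R.
      by rewrite -natr1; field; rewrite pnatr_eq0 -lt0n j1.
    have ej : 0 <= eps / jmax%:R by rewrite divr_ge0 // ltW.
    have x0 : 0 <= k.+1%:R * eps / jmax%:R - 2 * e k by rewrite ek; lra.
    have hy : sigma k.+1 * gamma k.+1 ^+ 2 != 0 ->
        (sigma k.+1 * gamma k.+1 ^+ 2) * ((k.+1%:R * eps / jmax%:R - 2 * e k) * (2 / (sigma k.+1 * gamma k.+1 ^+ 2)))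
        = 2 * (k.+1%:R * eps / jmax%:R - 2 * e k).
      move=> an; have [s0 g0] : sigma k.+1 != 0 /\ gamma k.+1 != 0.
        by move: an; rewrite mulf_eq0 negb_or sqrf_eq0 => /andP [-> ->].
      by field; rewrite s0 g0 pnatr_eq0 -lt0n j1.
    have hb := step_bound (a0 k.+1) x0 (snorm_ge0 _) (snorm_ge0 _) hy (hyp k.+1 hk1).
    simpl in hb; rewrite /sn /wn in hb *; lra.
  have := claim jmax (leqnn _); rewrite -/(e jmax) in hDR.
  have -> : jmax%:R * eps / jmax%:R = eps by field; rewrite pnatr_eq0 -lt0n j1.
  lra.
Qed.
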